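(* Let $T:X\rightrightarrows X^*$ be a pseudomonotone operator and let $P(T)$ be the set of all maximal pseudomonotone operators $M:X\rightrightarrows X^*$ with $T\subset M$. Then (1) $T^\rho=\bigcup_{M\in P(T)}M$; (2) $T^{\rho\rho}=\bigcap_{M\in P(T)}M$; (3) $T$ is maximal pseudomonotone if and only if $T=T^\rho$.
   Context: $X$ is a real Banach space with dual $X^*$ and pairing $\langle x,x^*\rangle=x^*(x)$. A multivalued operator $T:X\rightrightarrows X^*$ is identified with its graph $T\subset X\times X^*$. For $(x,x^* ),(y,y^* )\in X\times X^*$, write $(x,x^* )\sim_p(y,y^* )$ if either $\min\{\langle x-y,y^*\rangle,\langle y-x,x^*\rangle\}<0$ or $\langle x-y,y^*\rangle=\langle y-x,x^*\rangle=0$. The pseudomonotone polar of $T$ is $T^\rho=\{(x,x^* )\in X\times X^*: (x,x^* )\sim_p(y,y^* )\ \forall (y,y^* )\in T\}$, and $T^{\rho\rho}=(T^\rho)^\rho$. $T$ is pseudomonotone if for all $(x,x^* ),(y,y^* )\in T$, $\langle y-x,x^*\rangle\ge0$ implies $\langle y-x,y^*\rangle\ge0$. $T$ is maximal pseudomonotone if it is pseudomonotone and for every pseudomonotone $S$ with $T\subset S$ one has $S=T$. *)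

(* Defs.v *)
From Stdlib Require Import Reals.
Open Scope R_scope.

Record BanachSpace := mkBanachSpace {
  bs_car :> Type;
  bs_zero : bs_car;
  bs_add : bs_car -> bs_car -> bs_car;
  bs_opp : bs_car -> bs_car;
  bs_scal : R -> bs_car -> bs_car;
  bs_norm : bs_car -> R;
  bs_addA : forall x y z, bs_add x (bs_add y z) = bs_add (bs_add x y) z;
  bs_addC : forall x y, bs_add x y = bs_add y x;
  bs_add0 : forall x, bs_add x bs_zero = x;
  bs_addN : forall x, bs_add x (bs_opp x) = bs_zero;
  bs_scalA : forall a b x, bs_scal a (bs_scal b x) = bs_scal (a * b) x;
  bs_scal1 : forall x, bs_scal 1 x = x;
  bs_scalDr : forall a x y, bs_scal a (bs_add x y) = bs_add (bs_scal a x) (bs_scal a y);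
  bs_scalDl : forall a b x, bs_scal (a + b) x = bs_add (bs_scal a x) (bs_scal b x);
  bs_norm_eq0 : forall x, bs_norm x = 0 -> x = bs_zero;
  bs_norm_triangle : forall x y, bs_norm (bs_add x y) <= bs_norm x + bs_norm y;
  bs_norm_scal : forall a x, bs_norm (bs_scal a x) = Rabs a * bs_norm x;
  bs_complete : forall u : nat -> bs_car,
    (forall eps, 0 < eps -> exists N, forall m n, (N <= m)%nat -> (N <= n)%nat ->
        bs_norm (bs_add (u m) (bs_opp (u n))) < eps) ->
    exists l, forall eps, 0 < eps -> exists N, forall n, (N <= n)%nat ->
        bs_norm (bs_add (u n) (bs_opp l)) < eps
}.

Definition bs_sub (X : BanachSpace) (x y : X) : X := bs_add X x (bs_opp X y).

Record dual (X : BanachSpace) := mkDual {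
  dfun :> X -> R;
  dfun_add : forall x y, dfun (bs_add X x y) = dfun x + dfun y;
  dfun_scal : forall a x, dfun (bs_scal X a x) = a * dfun x;
  dfun_bounded : exists M, forall x, Rabs (dfun x) <= M * bs_norm X x
}.

Definition pairing (X : BanachSpace) (x : X) (xs : dual X) : R := dfun X xs x.

Definition operator (X : BanachSpace) := X -> dual X -> Prop.

Definition op_subset (X : BanachSpace) (S T : operator X) : Prop :=
  forall x xs, S x xs -> T x xs.

Definition op_eq (X : BanachSpace) (S T : operator X) : Prop :=
  forall x xs, S x xs <-> T x xs.

Definition rel_p (X : BanachSpace) (x : X) (xs : dual X) (y : X) (ys : dual X) : Prop :=
  Rmin (pairing X (bs_sub X x y) ys) (pairing X (bs_sub X y x) xs) < 0 \/
  (pairing X (bs_sub X x y) ys = 0 /\ pairing X (bs_sub X y x) xs = 0).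

Definition ps_polar (X : BanachSpace) (T : operator X) : operator X :=
  fun x xs => forall y ys, T y ys -> rel_p X x xs y ys.

Definition pseudomonotone (X : BanachSpace) (T : operator X) : Prop :=
  forall x xs y ys, T x xs -> T y ys ->
    pairing X (bs_sub X y x) xs >= 0 -> pairing X (bs_sub X y x) ys >= 0.

Definition max_pseudomonotone (X : BanachSpace) (T : operator X) : Prop :=
  pseudomonotone X T /\
  forall S : operator X, pseudomonotone X S -> op_subset X T S -> op_eq X S T.

(* Main.v *)
Require Import Defs.
From Stdlib Require Import Reals Lra Classical.
From mathcomp Require classical_sets.

Section Aux.
Variable X : BanachSpace.

Lemma pair_sub (x y : X) (f : dual X) : pairing X (bs_sub X x y) f = f x - f y.
Proof.
  unfold pairing, bs_sub. rewrite dfun_add.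
  assert (H0 : dfun X f (bs_zero X) = 0).
  { pose proof (dfun_add X f (bs_zero X) (bs_zero X)) as H.
    rewrite bs_add0 in H. lra. }
  pose proof (dfun_add X f y (bs_opp X y)) as H. rewrite bs_addN, H0 in H.
  simpl. lra.
Qed.

Lemma Rmin_neg u v : Rmin u v < 0 <-> (u < 0 \/ v < 0).
Proof. unfold Rmin; destruct (Rle_dec u v); split; intros; lra. Qed.

Lemma rel_p_num x xs y ys :
  rel_p X x xs y ys <->
  ((ys x - ys y < 0 \/ xs y - xs x < 0) \/ (ys x - ys y = 0 /\ xs y - xs x = 0)).
Proof. unfold rel_p. rewrite !pair_sub, Rmin_neg. tauto. Qed.

Lemma pm_rel (S : operator X) x xs y ys :
  pseudomonotone X S -> S x xs -> S y ys -> rel_p X x xs y ys.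
Proof.
  intros Hp Hx Hy. rewrite rel_p_num.
  pose proof (Hp x xs y ys Hx Hy) as H1. pose proof (Hp y ys x xs Hy Hx) as H2.
  rewrite !pair_sub in H1, H2.
  destruct (Rle_lt_dec 0 (xs y - xs x)); destruct (Rle_lt_dec 0 (ys x - ys y)).
  - specialize (H1 ltac:(lra)). specialize (H2 ltac:(lra)). right; lra.
  - left; left; lra.
  - left; right; lra.
  - left; right; lra.
Qed.

Lemma rel_pm (S : operator X) :
  (forall x xs y ys, S x xs -> S y ys -> rel_p X x xs y ys) -> pseudomonotone X S.
Proof.
  intros H x xs y ys Hx Hy Ha. specialize (H x xs y ys Hx Hy).
  rewrite rel_p_num in H. rewrite pair_sub in *. lra.
Qed.

Lemma max_ext (T0 : operator X) : pseudomonotone X T0 ->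
  exists M, max_pseudomonotone X M /\ op_subset X T0 M.
Proof.
  intros HT0.
  pose (P := fun (A : (X * dual X)%type -> Prop) =>
          pseudomonotone X (fun x xs => A (x, xs) \/ T0 x xs)).
  destruct (@classical_sets.Zorn_bigcup (X * dual X)%type P) as [A [PA Amax]].
  - intros F FP Ftot. unfold P. apply rel_pm.
    intros x xs y ys Hx Hy.
    destruct Hx as [[B FB Bx] | Tx]; destruct Hy as [[C FC Cy] | Ty].
    + destruct (Ftot B C FB FC) as [BC | CB].
      * apply (pm_rel _ x xs y ys (FP C FC)); left; [apply BC|]; auto.
      * apply (pm_rel _ x xs y ys (FP B FB)); left; [|apply CB]; auto.
    + apply (pm_rel _ x xs y ys (FP B FB)); [left|right]; auto.
    + apply (pm_rel _ x xs y ys (FP C FC)); [right|left]; auto.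
    + apply (pm_rel _ x xs y ys HT0); auto.
  - exists (fun x xs => A (x, xs) \/ T0 x xs). split; [split|].
    + apply rel_pm. intros x xs y ys Hx Hy.
      apply (pm_rel _ x xs y ys PA); auto.
    + intros S HS Hsub x xs. split; [|apply Hsub].
      intros Sx. apply NNPP. intros Hn.
      apply (Amax (fun p => S (fst p) (snd p))).
      * split.
        -- intros [a b] Ha. apply Hsub. left; auto.
        -- intros Hc. apply Hn. left. apply (Hc (x, xs)). exact Sx.
      * unfold P. apply rel_pm. intros a b c d Ha Hc.
        apply (pm_rel _ a b c d HS).
        -- simpl in *. destruct Ha as [Ha|Ha]; [exact Ha|apply Hsub; right; exact Ha].
        -- simpl in *. destruct Hc as [Hc|Hc]; [exact Hc|apply Hsub; right; exact Hc].
    + intros x xs Hx; right; auto.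
Qed.

End Aux.

Theorem mainTheorem9 (X : BanachSpace) (T : operator X) :
  pseudomonotone X T ->
  (* (1) T^rho = union of all maximal pseudomonotone M containing T *)
  op_eq X (ps_polar X T)
    (fun x xs => exists M : operator X,
        max_pseudomonotone X M /\ op_subset X T M /\ M x xs) /\
  (* (2) T^{rho rho} = intersection of all such M *)
  op_eq X (ps_polar X (ps_polar X T))
    (fun x xs => forall M : operator X,
        max_pseudomonotone X M -> op_subset X T M -> M x xs) /\
  (* (3) T maximal pseudomonotone iff T = T^rho *)
  (max_pseudomonotone X T <-> op_eq X T (ps_polar X T)).
Proof.
  intros HT.
  assert (H1 : op_eq X (ps_polar X T)
    (fun x xs => exists M : operator X,
        max_pseudomonotone X M /\ op_subset X T M /\ M x xs)).
  { intros x xs; split.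
    - intros Hx.
      destruct (max_ext X (fun y ys => T y ys \/ (y = x /\ ys = xs))) as [M [HM Hsub]].
      + apply rel_pm. intros a b c d Ha Hc.
        destruct Ha as [Ha|[-> ->]]; destruct Hc as [Hc|[-> ->]].
        * apply (pm_rel _ _ a b c d HT); auto.
        * apply rel_p_num. pose proof (Hx a b Ha) as K. rewrite rel_p_num in K. lra.
        * apply Hx; auto.
        * apply rel_p_num. lra.
      + exists M. split; [auto|split].
        * intros a b Ha; apply Hsub; left; auto.
        * apply Hsub; right; auto.
    - intros [M [HM [Hsub Mx]]] y ys Hy.
      apply (pm_rel _ _ x xs y ys (proj1 HM)); auto. }
  split; [exact H1|split].
  - intros x xs; split.
    + intros Hx M HM Hsub.
      assert (HMp : forall y ys, M y ys -> ps_polar X T y ys).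
      { intros y ys Hy. apply H1. exists M; auto. }
      destruct HM as [HMpm HMmax].
      apply (HMmax (fun y ys => M y ys \/ (y = x /\ ys = xs))).
      * apply rel_pm. intros a b c d Ha Hc.
        destruct Ha as [Ha|[-> ->]]; destruct Hc as [Hc|[-> ->]].
        -- apply (pm_rel _ _ a b c d HMpm); auto.
        -- pose proof (Hx a b (HMp a b Ha)) as K. rewrite rel_p_num in K |- *. lra.
        -- apply Hx; auto.
        -- apply rel_p_num. lra.
      * intros a b Ha; left; auto.
      * right; auto.
    + intros Hx y ys Hy. apply H1 in Hy. destruct Hy as [M [HM [Hsub My]]].
      apply (pm_rel _ _ x xs y ys (proj1 HM)); [exact (Hx M HM Hsub)|exact My].
  - split.
    + intros [_ Hmax] x xs. split.
      * intros Tx y ys Ty. exact (pm_rel _ _ x xs y ys HT Tx Ty).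
      * intros Hx. apply H1 in Hx. destruct Hx as [M [HM [Hsub Mx]]].
        apply (Hmax M (proj1 HM) Hsub). exact Mx.
    + intros Heq. split; [exact HT|].
      intros S HS Hsub x xs. split; [|apply Hsub].
      intros Sx. apply Heq. intros y ys Ty.
      exact (pm_rel _ _ x xs y ys HS Sx (Hsub y ys Ty)).
Qed.
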